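(* Let $n$ be a positive multiple of $3$ and $0\le m\le n/3$ an integer. Let $\mathcal{G}(n,m)$ be the $3$-graph defined in the context. Then the number $\varphi(n,m)$ of $4$-subsets of $[n]$ that induce exactly three edges in $\mathcal{G}(n,m)$ (i.e. induced copies of $K_4^{3-}$) equals $$\varphi(n,m)=\frac{1}{6}m^2(n-3m)(n-3m-3).$$
   Context: Let $[n]=V_1\cup V_2\cup V_3$ be a partition with $|V_j|=n/3$, and for $j\in[3]$ let $V_j=V_{1,j}\cup V_{2,j}$ be a partition with $|V_{1,j}|=m$ and $|V_{2,j}|=n/3-m$. Indices $j$ are taken modulo $3$. The $3$-graph $\mathcal{G}(n,m)$ on $[n]$ has as edges all triples $\{a,b,c\}$ of distinct vertices of the following forms: (1) $a,b,c\in V_{i,j}$ for some $i\in[2]$, $j\in[3]$; (2) $a,b\in V_{1,j}$, $c\in V_{2,j}$; (3) $a,b\in V_{1,j}$, $c\in V_{j+1}$; (4) $a,b\in V_{2,j}$, $c\in V_{1,j+1}$; (5) $a,b\in V_{2,j}$, $c\in V_{j-1}$; (6) $a\in V_{1,j}$, $b\in V_{2,j}$, $c\in V_{j+1}$ (for some $j\in[3]$). $K_4^{3-}$ denotes the $3$-graph on four vertices with three edges. *)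

(* Defs.v *)
From mathcomp Require Import all_boot all_order all_algebra.
Set Implicit Arguments. Unset Strict Implicit. Unset Printing Implicit Defensive.

(* Concrete labelling of the partition: with k = n/3,
   V_j = { v | v / k = j } for j in {0,1,2} (indices mod 3),
   V_{1,j} = { v in V_j | v mod k < m },  V_{2,j} = V_j \ V_{1,j}. *)
Section G.
Variables n m : nat.

Definition part (v : 'I_n) : nat := v %/ (n %/ 3).
Definition lvl1 (v : 'I_n) : bool := v %% (n %/ 3) < m.

Definition nextp (j : nat) : nat := (j + 1) %% 3.
Definition prevp (j : nat) : nat := (j + 2) %% 3.

(* a, b, c realize one of the patterns (1)-(6) in this order *)
Definition edge_pattern (a b c : 'I_n) : bool :=
  [|| [&& part a == part b, part b == part c,
                    lvl1 a == lvl1 b & lvl1 b == lvl1 c]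
    , [&& lvl1 a, lvl1 b, ~~ lvl1 c,
                    part a == part b & part c == part a]
    , [&& lvl1 a, lvl1 b, part a == part b & part c == nextp (part a)]
    , [&& ~~ lvl1 a, ~~ lvl1 b, lvl1 c,
                    part a == part b & part c == nextp (part a)]
    , [&& ~~ lvl1 a, ~~ lvl1 b, part a == part b
                    & part c == prevp (part a)]
    | [&& lvl1 a, ~~ lvl1 b, part a == part b
                    & part c == nextp (part a)]].

Definition Gedge (T : {set 'I_n}) : bool :=
  [exists a, exists b, exists c,
     [&& T == [set a; b; c], #|T| == 3 & edge_pattern a b c]].

Definition induced_edges (S : {set 'I_n}) : nat :=
  #|[set T : {set 'I_n} | (T \subset S) && Gedge T]|.

Definition phi : nat :=
  #|[set S : {set 'I_n} | (#|S| == 4) && (induced_edges S == 3)]|.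
End G.

(* Main.v *)
Require Import Defs.
From mathcomp Require Import all_boot all_order all_algebra.
From mathcomp Require Import ring lra zify.
Set Implicit Arguments. Unset Strict Implicit. Unset Printing Implicit Defensive.

Definition EPt (a b c : nat * bool) : bool :=
  [|| [&& a.1 == b.1, b.1 == c.1, a.2 == b.2 & b.2 == c.2]
    , [&& a.2, b.2, ~~ c.2, a.1 == b.1 & c.1 == a.1]
    , [&& a.2, b.2, a.1 == b.1 & c.1 == nextp a.1]
    , [&& ~~ a.2, ~~ b.2, c.2, a.1 == b.1 & c.1 == nextp a.1]
    , [&& ~~ a.2, ~~ b.2, a.1 == b.1 & c.1 == prevp a.1]
    | [&& a.2, ~~ b.2, a.1 == b.1 & c.1 == nextp a.1]].

Definition EPs a b c := [|| EPt a b c, EPt a c b, EPt b a c, EPt b c a, EPt c a b | EPt c b a].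

Definition sum4 t1 t2 t3 t4 : nat := EPs t2 t3 t4 + EPs t1 t3 t4 + EPs t1 t2 t4 + EPs t1 t2 t3.

Definition cfg (t1 t2 t3 t4 : nat * bool) :=
  [&& t1.2, ~~ t2.2, ~~ t3.2, t4.2, t2.1 == t1.1, t3.1 == t1.1 & t4.1 == nextp t1.1].

Definition cfgs t1 t2 t3 t4 :=
  [|| cfg t1 t2 t3 t4, cfg t1 t2 t4 t3, cfg t1 t3 t4 t2,
      cfg t2 t1 t3 t4, cfg t2 t1 t4 t3, cfg t2 t3 t4 t1,
      cfg t3 t1 t2 t4, cfg t3 t1 t4 t2, cfg t3 t2 t4 t1,
      cfg t4 t1 t2 t3, cfg t4 t1 t3 t2 | cfg t4 t2 t3 t1].

Lemma fin_check (t1 t2 t3 t4 : nat * bool) :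
  t1.1 < 3 -> t2.1 < 3 -> t3.1 < 3 -> t4.1 < 3 ->
  (sum4 t1 t2 t3 t4 == 3) = cfgs t1 t2 t3 t4.
Proof.
case: t1 => [[|[|[|?]]] []] //; case: t2 => [[|[|[|?]]] []] //;
case: t3 => [[|[|[|?]]] []] //; case: t4 => [[|[|[|?]]] []] //.
Qed.

Lemma card3 (T : finType) (b c d : T) :
  b != c -> c != d -> b != d -> #|[set b; c; d]| = 3.
Proof.
move=> bc cd bd.
rewrite setUC cardsU1 cards2 bc !inE negb_or eq_sym bd eq_sym cd.
by [].
Qed.

Lemma card4 (T : finType) (a b c d : T) :
  a != b -> a != c -> a != d -> b != c -> b != d -> c != d ->
  #|[set a; b; c; d]| = 4.
Proof.
move=> ab ac ad bc bd cd.
rewrite setUC cardsU1 [[set a; b; c]]setUC cardsU1 cards2 !inE !negb_or.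
by rewrite (eq_sym d c) (eq_sym d a) (eq_sym d b) (eq_sym c a) (eq_sym c b) ab ac ad bc bd cd.
Qed.

Lemma card3_dist (T : finType) (x y z : T) :
  #|[set x; y; z]| = 3 -> [/\ x != y, y != z & x != z].
Proof.
move=> H; split; apply/negP=> /eqP E; subst.
- move: H; rewrite setUid cards2; by case: (_ != _).
- move: H; rewrite -setUA setUid cards2; by case: (_ != _).
- move: H; rewrite setUAC setUid cards2; by case: (_ != _).
Qed.

Lemma sub4 (T : finType) (S : {set T}) : #|S| = 4 ->
  [set U : {set T} | U \subset S & #|U| == 3] = [set S :\ x | x in S].
Proof.
move=> HS; apply/setP=> U; rewrite inE; apply/andP/imsetP.
- case=> sUS /eqP cU.
  have: #|S :\: U| == 1 by rewrite cardsDS // HS cU.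
  case/cards1P=> x Ex; exists x.
    have: x \in S :\: U by rewrite Ex set11.
    by rewrite inE => /andP[].
  rewrite -Ex setDDr setDv set0U; apply/esym/setIidPr => //.
- case=> x xS ->; split; first exact: subsetDl.
  by move: (cardsD1 x S); rewrite xS HS add1n => -[<-].
Qed.

Lemma filter4 (T : finType) (S : {set T}) (P : pred T) (a b c d : T) :
  uniq [:: a; b; c; d] -> (forall v, (v \in S) = (v \in [:: a; b; c; d])) ->
  #|[set x in S | P x]| = P a + P b + P c + P d.
Proof.
move=> U HS.
have -> : #|[set x in S | P x]| = #|[seq x <- [:: a; b; c; d] | P x]|.
  by apply: eq_card => v; rewrite inE mem_filter HS andbC.
rewrite (card_uniqP _); last exact: filter_uniq.
by rewrite size_filter /= !addnA addn0.
Qed.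

Definition ty n m (v : 'I_n) : nat * bool := (part v, lvl1 m v).

Lemma ep_ty n m (a b c : 'I_n) :
  edge_pattern m a b c = EPt (ty m a) (ty m b) (ty m c).
Proof. by []. Qed.

Lemma Gedge3 n m (b c d : 'I_n) : b != c -> c != d -> b != d ->
  Gedge m [set b; c; d] = EPs (ty m b) (ty m c) (ty m d).
Proof.
move=> bc cd bd; apply/existsP/idP.
- case=> x /existsP[y /existsP[z /and3P[/eqP E /eqP C P]]].
  rewrite ep_ty in P.
  have := C; rewrite E => /card3_dist [xy yz xz].
  have xin : x \in [set b; c; d] by rewrite E !inE eqxx.
  have yin : y \in [set b; c; d] by rewrite E !inE eqxx ?orbT.
  have zin : z \in [set b; c; d] by rewrite E !inE eqxx ?orbT.
  move: xin yin zin; rewrite !inE -!orbA => /or3P[]/eqP ? /or3P[]/eqP ? /or3P[]/eqP ?;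
  subst; first [ by move: xy; rewrite eqxx | by move: yz; rewrite eqxx
               | by move: xz; rewrite eqxx | by rewrite /EPs P ?orbT ].
- have C3 := card3 bc cd bd.
  rewrite /EPs => /orP[P|/orP[P|/orP[P|/orP[P|/orP[P|P]]]]];
  [ exists b; apply/existsP; exists c; apply/existsP; exists d
  | exists b; apply/existsP; exists d; apply/existsP; exists c
  | exists c; apply/existsP; exists b; apply/existsP; exists d
  | exists c; apply/existsP; exists d; apply/existsP; exists b
  | exists d; apply/existsP; exists b; apply/existsP; exists c
  | exists d; apply/existsP; exists c; apply/existsP; exists b ];
  (apply/and3P; split; [ apply/eqP/setP => v; rewrite !inE;
   by case: (v == b); case: (v == c); case: (v == d) | by rewrite C3 | by rewrite ep_ty]).
Qed.

Lemma Gedge_card n m (T : {set 'I_n}) : Gedge m T -> #|T| = 3.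
Proof. by case/existsP=> x /existsP[y /existsP[z /and3P[_ /eqP]]]. Qed.

Lemma ind4 n m (S : {set 'I_n}) : #|S| = 4 ->
  induced_edges m S = #|[set x in S | Gedge m (S :\ x)]|.
Proof.
move=> HS; rewrite /induced_edges.
have -> : [set T : {set 'I_n} | (T \subset S) && Gedge m T] =
          [set S :\ x | x in [set x in S | Gedge m (S :\ x)]].
  apply/setP=> T; rewrite inE; apply/andP/imsetP.
  - case=> sTS G.
    have : T \in [set U : {set 'I_n} | U \subset S & #|U| == 3].
      by rewrite inE sTS (Gedge_card G) eqxx.
    rewrite sub4 // => /imsetP[x xS ET]; exists x => //.
    by rewrite inE xS -ET.
  - case=> x; rewrite inE => /andP[xS G] ->; split=> //; exact: subsetDl.
rewrite card_in_imset // => x y; rewrite !inE => /andP[xS _] /andP[yS _] E.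
apply/eqP; apply/negPn/negP => xy.
have : x \in S :\ y by rewrite !inE xy xS.
by rewrite -E !inE eqxx.
Qed.

Lemma enum4 (T : finType) (S : {set T}) : #|S| = 4 ->
  exists a b c d, uniq [:: a; b; c; d] /\
    forall v, (v \in S) = (v \in [:: a; b; c; d]).
Proof.
move=> HS; have U := enum_uniq S.
have : size (enum S) = 4 by rewrite -cardE.
have M : forall v, (v \in S) = (v \in enum S) by move=> v; rewrite mem_enum.
move: U M; case: (enum S) => [|a [|b [|c [|d [|e s]]]]] // U M _.
by exists a, b, c, d.
Qed.

Lemma uniq4 (T : eqType) (a b c d : T) : uniq [:: a; b; c; d] ->
  [/\ a != b, a != c, a != d & [/\ b != c, b != d & c != d]].
Proof.
rewrite /= !inE !negb_or => /and4P[/and3P[ab ac ad] /andP[bc bd] cd _].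
by [].
Qed.

Lemma ind_sum n m (S : {set 'I_n}) a b c d :
  uniq [:: a; b; c; d] -> (forall v, (v \in S) = (v \in [:: a; b; c; d])) ->
  induced_edges m S = sum4 (ty m a) (ty m b) (ty m c) (ty m d).
Proof.
move=> U HS; have [ab ac ad [bc bd cd]] := uniq4 U.
have C : #|S| = 4 by rewrite (eq_card HS); apply/card_uniqP.
rewrite ind4 // (filter4 _ U HS).
have E : forall x y z w, (forall v, (v \in S) = [|| v == x, v == y, v == z | v == w]) ->
    x != y -> x != z -> x != w -> S :\ x = [set y; z; w].
  move=> x y z w H xy xz xw; apply/setP=> v; rewrite !inE H.
  case: (eqVneq v x) => [->|vx].
    by rewrite (negbTE xy) (negbTE xz) (negbTE xw).
  by rewrite /= !orbA.
have H1 : forall v, (v \in S) = [|| v == a, v == b, v == c | v == d].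
  by move=> v; rewrite HS !inE.
rewrite (E a b c d) //.
rewrite (E b a c d); first last.
- by []. - by []. - by rewrite eq_sym.
- by move=> v; rewrite H1; case: (v == a); case: (v == b).
rewrite (E c a b d); first last.
- by []. - by rewrite eq_sym. - by rewrite eq_sym.
- by move=> v; rewrite H1; case: (v == a); case: (v == b); case: (v == c).
rewrite (E d a b c); first last.
- by rewrite eq_sym. - by rewrite eq_sym. - by rewrite eq_sym.
- by move=> v; rewrite H1; case: (v == a); case: (v == b); case: (v == c); case: (v == d).
rewrite !Gedge3 //.
Qed.

Definition V1 n m (j : nat) : {set 'I_n} := [set v | lvl1 m v & part v == j].
Definition V2 n m (j : nat) : {set 'I_n} := [set v | ~~ lvl1 m v & part v == j].
Definition inD n m (x : 'I_3 * 'I_n * {set 'I_n} * 'I_n) : bool :=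
  [&& x.1.1.2 \in V1 n m x.1.1.1, x.1.2 \subset V2 n m x.1.1.1, #|x.1.2| == 2
    & x.2 \in V1 n m (nextp x.1.1.1)].
Definition Fm n (x : 'I_3 * 'I_n * {set 'I_n} * 'I_n) : {set 'I_n} :=
  [set x.1.1.2] :|: x.1.2 :|: [set x.2].

Lemma part_lt3 n (v : 'I_n) : 0 < n -> 3 %| n -> part v < 3.
Proof.
move=> n0 d3; have k0 : 0 < n %/ 3 by rewrite divn_gt0 // dvdn_leq.
by rewrite /part ltn_divLR // mulnC divnK.
Qed.

Lemma nextp_neq j : j < 3 -> (nextp j == j) = false.
Proof. by case: j => [|[|[|]]]. Qed.

Lemma mkD n m (S : {set 'I_n}) x1 x2 x3 x4 :
  0 < n -> 3 %| n ->
  cfg (ty m x1) (ty m x2) (ty m x3) (ty m x4) -> x2 != x3 ->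
  (forall v, (v \in S) = [|| v == x1, v == x2, v == x3 | v == x4]) ->
  S \in [set Fm x | x in [set x | inD m x]].
Proof.
move=> n0 d3; rewrite /cfg /= => /and5P[l1 l2 l3 l4 /and3P[/eqP e2 /eqP e3 /eqP e4]] x23 HS.
apply/imsetP; exists (Ordinal (part_lt3 x1 n0 d3), x1, [set x2; x3], x4).
  rewrite inE /inD /= !inE l1 eqxx l4 e4 eqxx cards2 x23 !andbT /=.
  by apply/subsetP => v; rewrite !inE => /orP[]/eqP->; rewrite ?l2 ?l3 ?e2 ?e3 eqxx.
by apply/setP => v; rewrite /Fm /= HS !inE !orbA.
Qed.

Lemma neq_lvl n m (u w : 'I_n) : lvl1 m u -> ~~ lvl1 m w -> u != w.
Proof. by move=> lu lw; apply/eqP => E; move: lw; rewrite -E lu. Qed.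

Lemma neq_part n (u w : 'I_n) j : j < 3 -> part u = j -> part w = nextp j -> u != w.
Proof. by move=> j3 pu pw; apply/eqP => E; move: pw; rewrite -E pu => /eqP; rewrite eq_sym nextp_neq. Qed.

Lemma charac n m : 0 < n -> 3 %| n ->
  [set S : {set 'I_n} | (#|S| == 4) && (induced_edges m S == 3)] =
  [set Fm x | x in [set x | inD m x]].
Proof.
move=> n0 d3; apply/setP => S; rewrite inE; apply/idP/idP.
- case/andP=> /eqP C4 /eqP I3.
  have [a [b [c [d [U HS]]]]] := enum4 C4.
  have [ab ac ad [bc bd cd]] := uniq4 U.
  move: I3; rewrite (ind_sum m U HS) => /eqP.
  rewrite fin_check; try exact: part_lt3.
  have H1 : forall v, (v \in S) = [|| v == a, v == b, v == c | v == d].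
    by move=> v; rewrite HS !inE.
  rewrite /cfgs => /orP[H|/orP[H|/orP[H|/orP[H|/orP[H|/orP[H|/orP[H|/orP[H|/orP[H|/orP[H|/orP[H|H]]]]]]]]]]];
  apply: (mkD n0 d3 H); first [ done | by rewrite eq_sym |
    by move=> v; rewrite H1; case: (v == a); case: (v == b); case: (v == c); case: (v == d) ].
- case/imsetP => -[[[j a] B] d]; rewrite inE /inD /= => /and4P[].
  rewrite !inE => /andP[la /eqP pa] sB /cards2P[b [c [bc EB]]] /andP[ld /eqP pd] ->.
  have j3 : j < 3 := ltn_ord j.
  move: sB; rewrite EB => /subsetP sB.
  have /andP[lb /eqP pb] : ~~ lvl1 m b && (part b == j) by have := sB b; rewrite !inE eqxx => /(_ isT).
  have /andP[lc /eqP pc] : ~~ lvl1 m c && (part c == j) by have := sB c; rewrite !inE eqxx orbT => /(_ isT).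
  have ab := neq_lvl la lb; have ac := neq_lvl la lc.
  have ad := neq_part j3 pa pd.
  have bd : b != d by rewrite eq_sym; apply: neq_lvl ld lb.
  have cd : c != d by rewrite eq_sym; apply: neq_lvl ld lc.
  have U : uniq [:: a; b; c; d] by rewrite /= !inE !negb_or ab ac ad bc bd cd.
  have HS : forall v, (v \in Fm (j, a, [set b; c], d)) = (v \in [:: a; b; c; d]).
    by move=> v; rewrite /Fm /= !inE !orbA.
  rewrite (ind_sum m U HS) (eq_card HS) (card_uniqP U) eqxx /=.
  rewrite fin_check /=; try exact: part_lt3.
  by rewrite /cfgs /cfg /= la lb lc ld pa pb pc pd !eqxx.
Qed.

Lemma sum_blocks p k (F : nat -> nat) :
  \sum_(0 <= i < p * k) F i = \sum_(0 <= q < p) \sum_(0 <= r < k) F (q * k + r).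
Proof.
elim: p => [|p IH]; first by rewrite mul0n !big_geq.
rewrite big_nat_recr //= -IH mulSnr (big_cat_nat _ (n := p * k)) ?leq_addr //=.
congr (_ + _).
rewrite -{1}[p * k]add0n big_addn.
rewrite addKn; apply: eq_bigr => r _; by rewrite addnC.
Qed.

Lemma cardV n j (P : pred nat) : 0 < n -> 3 %| n -> j < 3 ->
  #|[set v : 'I_n | P (v %% (n %/ 3)) && (v %/ (n %/ 3) == j)]| =
  \sum_(0 <= r < n %/ 3) P r.
Proof.
move=> n0 d3 j3.
have [k nk] : exists k, n = 3 * k by exists (n %/ 3); rewrite mulnC divnK.
have k0 : 0 < k by move: n0; rewrite nk muln_gt0.
have -> : #|[set v : 'I_n | P (v %% (n %/ 3)) && (v %/ (n %/ 3) == j)]| =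
    \sum_(v < n) (P (v %% (n %/ 3)) && (v %/ (n %/ 3) == j)).
  rewrite -sum1_card big_mkcond /=; apply: eq_bigr => i _; rewrite inE.
  by case: (_ && _).
rewrite -(big_mkord xpredT (fun i => (P (i %% (n %/ 3)) && (i %/ (n %/ 3) == j) : nat))).
rewrite nk mulKn // sum_blocks.
rewrite (eq_big_nat _ _ (F2 := fun q => \sum_(0 <= r < k) (P r && (q == j) : nat))); last first.
  move=> q _; apply: eq_big_nat => r /andP[_ rk].
  by rewrite modnMDl modn_small // divnMDl // divn_small // addn0.
rewrite exchange_big_nat; apply: eq_big_nat => r _.
by case: j j3 => [|[|[|]]] // _; (do 3 rewrite big_ltn //); rewrite big_geq //=; case: (P r).
Qed.

Lemma sumbS (T : finType) (A : {set T}) : \sum_(x : T) (x \in A : nat) = #|A|.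
Proof. by rewrite -sum1_card [RHS]big_mkcond; apply: eq_bigr => x _; case: (x \in A). Qed.

Lemma cardD n m :
  #|[set x : 'I_3 * 'I_n * {set 'I_n} * 'I_n | inD m x]| = \sum_(j < 3) #|V1 n m j| *
     (#|[set B : {set 'I_n} | B \subset V2 n m j & #|B| == 2]| * #|V1 n m (nextp j)|).
Proof.
rewrite -sum1_card big_mkcond /=.
transitivity (\sum_(p : 'I_3 * 'I_n * {set 'I_n}) \sum_(d : 'I_n) (inD m (p, d) : nat)).
  by rewrite pair_bigA; apply: eq_bigr => -[p d] _; rewrite inE; case: inD.
transitivity (\sum_(q : 'I_3 * 'I_n) \sum_(B : {set 'I_n}) \sum_(d : 'I_n) (inD m (q, B, d) : nat)).
  by rewrite [RHS]pair_bigA; apply: eq_bigr => -[q B] _.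
transitivity (\sum_(j : 'I_3) \sum_(a : 'I_n) \sum_(B : {set 'I_n}) \sum_(d : 'I_n) (inD m (j, a, B, d) : nat)).
  by rewrite [RHS]pair_bigA; apply: eq_bigr => -[j a] _.
apply: eq_bigr => j _.
rewrite -sumbS big_distrl /=; apply: eq_bigr => a _.
rewrite -(sumbS [set B : {set 'I_n} | B \subset V2 n m j & #|B| == 2]) -sumbS big_distrl /= big_distrr /=.
apply: eq_bigr => B _; rewrite big_distrr /= big_distrr /=; apply: eq_bigr => d _.
rewrite /inD /= inE.
rewrite !inE; by case: (lvl1 m a && _); case: (B \subset _); case: (#|B| == 2); case: (lvl1 m d && _).
Qed.

Lemma RB n m (j : 'I_3) (a : 'I_n) (B : {set 'I_n}) (d : 'I_n) : lvl1 m a -> B \subset V2 n m j -> lvl1 m d ->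
  [set v in Fm (j, a, B, d) | ~~ lvl1 m v] = B.
Proof.
move=> la sB ld; apply/setP => v; rewrite !inE /Fm /= ?inE.
case vB: (v \in B).
  by have := subsetP sB v vB; rewrite inE => /andP[-> _]; rewrite orbT.
case: (eqVneq v a) => [->|va]; first by rewrite la.
case: (eqVneq v d) => [->|vd]; first by rewrite ld.
by [].
Qed.

Lemma RA n m (j : 'I_3) (a : 'I_n) (B : {set 'I_n}) (d : 'I_n) : lvl1 m a -> part a = j -> B \subset V2 n m j ->
  part d = nextp j ->
  [set v in Fm (j, a, B, d) | lvl1 m v && (part v == j)] = [set a].
Proof.
move=> la pa sB pd; apply/setP => v; rewrite !inE /Fm /= ?inE.
case: (eqVneq v a) => [->|va]; first by rewrite la pa eqxx.
case vB: (v \in B).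
  by have := subsetP sB v vB; rewrite inE => /andP[/negbTE -> _].
case: (eqVneq v d) => [->|vd]; last by [].
by rewrite pd nextp_neq ?andbF // ltn_ord.
Qed.

Lemma RD n m (j : 'I_3) (a : 'I_n) (B : {set 'I_n}) (d : 'I_n) : part a = j -> B \subset V2 n m j ->
  lvl1 m d -> part d = nextp j ->
  [set v in Fm (j, a, B, d) | lvl1 m v && (part v == nextp j)] = [set d].
Proof.
move=> pa sB ld pd; apply/setP => v; rewrite !inE /Fm /= ?inE.
case: (eqVneq v d) => [->|vd]; first by rewrite ld pd eqxx orbT.
case vB: (v \in B).
  by have := subsetP sB v vB; rewrite inE => /andP[/negbTE -> _]; rewrite /= andbF.
case: (eqVneq v a) => [->|va]; last by [].
by rewrite pa eq_sym nextp_neq ?andbF // ltn_ord.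
Qed.

Lemma Fm_inj n m : {in [set x | inD m x] &, injective (@Fm n)}.
Proof.
move=> [[[j a] B] d] [[[j' a'] B'] d']; rewrite !inE /inD /= !inE.
move=> /and4P[/andP[la /eqP pa] sB /cards2P[b [c [bc EB]]] /andP[ld /eqP pd]].
move=> /and4P[/andP[la' /eqP pa'] sB' _ /andP[ld' /eqP pd']] E.
have EB' : B = B' by rewrite -(RB la sB ld) E (RB la' sB' ld').
subst B'.
have bB : b \in B by rewrite EB !inE eqxx.
have := subsetP sB b bB; have := subsetP sB' b bB; rewrite !inE => /andP[_ /eqP p1] /andP[_ /eqP p2].
have Ej : j = j' by apply: val_inj; rewrite /= -p1 -p2.
subst j'.
have Ea : [set a] = [set a'] by rewrite -(RA la pa sB pd) E (RA la' pa' sB pd').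
have Ed : [set d] = [set d'] by rewrite -(RD pa sB ld pd) E (RD pa' sB ld' pd').
by rewrite (set1_inj Ea) (set1_inj Ed).
Qed.

Lemma sumlt m k : m <= k -> \sum_(0 <= r < k) (r < m : nat) = m.
Proof.
move=> mk; rewrite (big_cat_nat _ (n := m)) //.
have -> : \sum_(0 <= r < m) (r < m : nat) = \sum_(0 <= r < m) 1.
  by apply: eq_big_nat => r /andP[_ ->].
have -> : \sum_(m <= r < k) (r < m : nat) = \sum_(m <= r < k) 0.
  by apply: eq_big_nat => r /andP[]; rewrite leqNgt => /negbTE ->.
by rewrite !sum_nat_const_nat /= muln1 muln0 subn0 addn0.
Qed.

Lemma sumge m k : m <= k -> \sum_(0 <= r < k) (~~ (r < m) : nat) = k - m.
Proof.
move=> mk; rewrite (big_cat_nat _ (n := m)) //.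
have -> : \sum_(0 <= r < m) (~~ (r < m) : nat) = \sum_(0 <= r < m) 0.
  by apply: eq_big_nat => r /andP[_ ->].
have -> : \sum_(m <= r < k) (~~ (r < m) : nat) = \sum_(m <= r < k) 1.
  by apply: eq_big_nat => r /andP[]; rewrite leqNgt => ->.
by rewrite !sum_nat_const_nat /= muln1 muln0 add0n.
Qed.

Lemma phi_nat n m : 0 < n -> 3 %| n -> m <= n %/ 3 ->
  phi n m = 3 * (m * ('C(n %/ 3 - m, 2) * m)).
Proof.
move=> n0 d3 mk.
rewrite /phi charac // card_in_imset; last exact: Fm_inj.
rewrite cardD.
have V1c j : j < 3 -> #|V1 n m j| = m.
  by move=> j3; rewrite /V1 /lvl1 /part (@cardV n j (fun r => r < m)) // sumlt.
have V2c j : j < 3 -> #|V2 n m j| = n %/ 3 - m.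
  by move=> j3; rewrite /V2 /lvl1 /part (@cardV n j (fun r => ~~ (r < m))) // sumge.
rewrite (eq_bigr (fun _ => m * ('C(n %/ 3 - m, 2) * m))); last first.
  move=> j _; rewrite cards_draws V1c ?V2c ?V1c //.
  by rewrite /nextp ltn_pmod.
by rewrite big_const_ord /= addn0 mulSn mulSn mul1n.
Qed.

Import GRing.Theory Num.Theory.
Local Open Scope ring_scope.

Lemma bin2R (x : nat) : ('C(x, 2))%:R * 2 = x%:R * (x%:R - 1) :> rat.
Proof.
have H : ('C(x, 2) * 2 = x * x.-1)%N.
  elim: x => [|y IH] //; rewrite binS bin1 mulnDl IH; case: y {IH} => //= y; nia.
case: x H => [|y] H; first by rewrite /= mul0r.
rewrite -natrM H natrM /= -natr1 addrK.
by [].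
Qed.

Unset Implicit Arguments.

Theorem lemma2p1 (n m : nat) :
  (0 < n)%N -> (3 %| n)%N -> (m <= n %/ 3)%N ->
  (phi n m)%:R = (1 / 6 : rat) * (m%:R ^+ 2) * (n%:R - 3 * m%:R)
                   * (n%:R - 3 * m%:R - 3).
Proof.
move=> n0 d3 mk; rewrite phi_nat //.
have [k nk] : exists k, n = (3 * k)%N by exists (n %/ 3)%N; rewrite mulnC divnK.
subst n; rewrite mulKn // in mk *.
have [x kx] : exists x, k = (m + x)%N by exists (k - m)%N; rewrite subnKC.
subst k; rewrite addKn.
have B := bin2R x.
rewrite !natrM !natrD.
have -> : ('C(x, 2))%:R = x%:R * (x%:R - 1) / 2 :> rat.
  by rewrite -B mulfK.
rewrite (_ : 6 = 3 * 2) ?natrM; last by [].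
by field.
Qed.
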